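(* Let $n\ge2$ be an integer, $j$ a positive integer, $\alpha=1-\frac1n$, $\gamma_n=\frac12+\frac1n$, $\beta\le 0$ real with $Q\equiv\alpha-\beta-1\ge1$. For $z>0$ set $y=-jz^n$, $F(t)=yt+Q\log\frac{t}{t+1}$, $G(u)=-u^2+2(-y)^{1/2}u+(2Q+\gamma_n)\log u$, $t_0(z)=\frac{-1+\sqrt{1+4Q/(-y)}}{2}$, $u_0(z)=\frac{(-y)^{1/2}}{2}(1+\sqrt{1+\frac{4Q+2\gamma_n}{-y}})$, and $$\widehat F(z)=-\frac{jz^n}{2}+F(t_0(z)),\qquad \widehat G(z)=-\frac{jz^n}{2}+G(u_0(z)),$$ where $F$ and $G$ are evaluated with $y=-jz^n$. Then for every $\eta\ge0$, on the region $z\ge\eta^{2/n}$ the function $\widehat F(z)+\eta z^{n/2}$ is decreasing and the function $\widehat G(z)-\eta z^{n/2}$ is increasing. *)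

(* Defs.v *)
From Stdlib Require Import Reals Lra.
Open Scope R_scope.

Definition alpha (n : nat) : R := 1 - 1 / INR n.
Definition gamma_n (n : nat) : R := 1 / 2 + 1 / INR n.
Definition Qof (n : nat) (beta : R) : R := alpha n - beta - 1.

(* Real power x^a for x >= 0 with the convention 0^a = 0 (a <> 0);
   Stdlib's Rpower 0 a = 1, so we patch the value at 0. *)
Definition powR0 (x a : R) : R :=
  if Req_EM_T x 0 then 0 else Rpower x a.

Definition yof (n j : nat) (z : R) : R := - (INR j * z ^ n).

Definition Ffun (Q y t : R) : R := y * t + Q * ln (t / (t + 1)).
Definition Gfun (n : nat) (Q y u : R) : R :=
  - u ^ 2 + 2 * sqrt (- y) * u + (2 * Q + gamma_n n) * ln u.

Definition t0 (n j : nat) (Q z : R) : R :=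
  (-1 + sqrt (1 + 4 * Q / (- yof n j z))) / 2.
Definition u0 (n j : nat) (Q z : R) : R :=
  sqrt (- yof n j z) / 2 *
  (1 + sqrt (1 + (4 * Q + 2 * gamma_n n) / (- yof n j z))).

Definition Fhat (n j : nat) (Q z : R) : R :=
  - (INR j * z ^ n) / 2 + Ffun Q (yof n j z) (t0 n j Q z).
Definition Ghat (n j : nat) (Q z : R) : R :=
  - (INR j * z ^ n) / 2 + Gfun n Q (yof n j z) (u0 n j Q z).

(* Main.v *)
Require Import Defs.
From Stdlib Require Import Reals.
From Stdlib Require Import Lra Psatz.
Open Scope R_scope.

Lemma ln_diff_le (a b : R) : 0 < a -> 0 < b -> ln a - ln b <= (a - b) / b.
Proof.
  intros Ha Hb.
  assert (H := exp_ineq1_le (ln (a / b))).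
  rewrite exp_ln in H by (apply Rdiv_lt_0_compat; lra).
  unfold Rdiv in *. rewrite ln_mult in H by (try apply Rinv_0_lt_compat; lra).
  rewrite ln_Rinv in H by lra.
  replace ((a - b) * / b) with (a * / b - 1) by (field; repeat split; lra). lra.
Qed.

Lemma F_max (s Q t : R) : 0 < s -> 0 < Q -> 0 < t ->
  let t0 := (-1 + sqrt (1 + 4 * Q / s)) / 2 in
  -s * t + Q * ln (t / (t + 1)) <= -s * t0 + Q * ln (t0 / (t0 + 1)).
Proof.
  intros Hs HQ Ht t0.
  set (S := sqrt (1 + 4 * Q / s)).
  assert (HS2 : S * S = 1 + 4 * Q / s).
  { unfold S; apply sqrt_sqrt. assert (0 < 4 * Q / s) by (apply Rdiv_lt_0_compat; lra). lra. }
  assert (HS0 : 0 <= S) by apply sqrt_pos.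
  assert (HqS : 4 * Q / s * s = 4 * Q) by (field; repeat split; lra).
  assert (HS1 : 1 < S) by (assert (0 < 4 * Q / s) by (apply Rdiv_lt_0_compat; lra); nra).
  assert (Ht0 : 0 < t0) by (unfold t0; fold S; lra).
  assert (Hcrit : s * t0 * (t0 + 1) = Q).
  { unfold t0; fold S. replace (s * ((-1 + S) / 2) * ((-1 + S) / 2 + 1)) with (s * (S*S - 1) / 4) by field.
    rewrite HS2. field; repeat split; lra. }
  clearbody t0.
  assert (Hx : 0 < t / (t + 1)) by (apply Rdiv_lt_0_compat; lra).
  assert (Hx0 : 0 < t0 / (t0 + 1)) by (apply Rdiv_lt_0_compat; lra).
  assert (HL := ln_diff_le _ _ Hx Hx0).
  assert (E : (t / (t + 1) - t0 / (t0 + 1)) / (t0 / (t0 + 1)) = (t - t0) / ((t+1) * t0)) by (field; repeat split; lra).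
  rewrite E in HL.
  assert (Q * (ln (t / (t + 1)) - ln (t0 / (t0 + 1))) <= Q * ((t - t0) / ((t + 1) * t0))) by (apply Rmult_le_compat_l; lra).
  assert (E2 : Q * ((t - t0) / ((t + 1) * t0)) = s * (t-t0) * (t0+1) / (t+1)).
  { rewrite <- Hcrit. field; repeat split; lra. }
  rewrite E2 in H.
  assert (s * (t - t0) * (t0 + 1) / (t + 1) - s * (t - t0) = - (s * (t-t0)^2 /(t+1))) by (field; repeat split; lra).
  assert (0 <= s * (t-t0)^2 /(t+1)).
  { unfold Rdiv. apply Rmult_le_pos; [apply Rmult_le_pos; [lra|apply pow2_ge_0] | left; apply Rinv_0_lt_compat; lra]. }
  lra.
Qed.

Lemma G_max (r c u u0 : R) : 0 <= r -> 0 < c -> 0 < u -> 0 < u0 ->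
  u0 * (u0 - r) * 2 = c ->
  c * ln u - (u - r)^2 <= c * ln u0 - (u0 - r)^2.
Proof.
  intros Hr Hc Hu Hu0 Hcrit.
  assert (HL := ln_diff_le _ _ Hu Hu0).
  assert (c * (ln u - ln u0) <= c * ((u - u0) / u0)) by (apply Rmult_le_compat_l; lra).
  assert (E : c * ((u - u0) / u0) = 2 * (u0 - r) * (u - u0)) by (rewrite <- Hcrit; field; repeat split; lra).
  rewrite E in H. assert (0 <= (u - u0)^2) by apply pow2_ge_0. nra.
Qed.

Lemma eta_part (j : nat) (eta p1 p2 : R) : (1 <= j)%nat -> 0 <= eta -> eta <= p1 -> 0 < p1 -> p1 < p2 ->
  eta * (p2 - p1) <= INR j * (p2 ^ 2 - p1 ^ 2) / 2.
Proof.
  intros Hj He H1 H2 H3.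
  assert (1 <= INR j) by (apply (le_INR 1); lia).
  assert (eta * (p2 - p1) <= p1 * (p2 - p1)) by nra.
  assert (p1 * (p2 - p1) <= (p2 ^ 2 - p1 ^ 2) / 2) by nra.
  assert (0 <= (p2 ^ 2 - p1 ^ 2) / 2) by nra.
  nra.
Qed.

Lemma pow_part (n : nat) (z : R) : (2 <= n)%nat -> 0 < z ->
  z ^ n = (Rpower z (INR n / 2)) ^ 2 /\ 0 < Rpower z (INR n / 2).
Proof.
  intros Hn Hz. split.
  - rewrite <- (Rpower_pow 2 (Rpower z (INR n / 2))) by (unfold Rpower; apply exp_pos).
    rewrite Rpower_mult. replace (INR n / 2 * INR 2) with (INR n) by (simpl; field).
    now rewrite Rpower_pow.
  - unfold Rpower; apply exp_pos.
Qed.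

Lemma eta_le (n : nat) (eta z : R) : (2 <= n)%nat -> 0 <= eta -> 0 < z ->
  powR0 eta (2 / INR n) <= z -> eta <= Rpower z (INR n / 2).
Proof.
  intros Hn He Hz H. unfold powR0 in H.
  assert (0 < INR n) by (apply lt_0_INR; lia).
  destruct (Req_EM_T eta 0) as [E|E].
  - subst. left. unfold Rpower; apply exp_pos.
  - assert (Hp : Rpower (Rpower eta (2 / INR n)) (INR n / 2) <= Rpower z (INR n / 2)).
    { apply Rle_Rpower_l. left; apply Rdiv_lt_0_compat; lra. split; [unfold Rpower; apply exp_pos| exact H]. }
    rewrite Rpower_mult in Hp. replace (2 / INR n * (INR n / 2)) with 1 in Hp by (field; repeat split; lra).
    rewrite Rpower_1 in Hp by lra. exact Hp.
Qed.

Theorem lemma4p7 (n j : nat) (beta eta : R) :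
  (2 <= n)%nat -> (1 <= j)%nat -> beta <= 0 -> 1 <= Qof n beta -> 0 <= eta ->
  (forall z1 z2 : R, 0 < z1 -> powR0 eta (2 / INR n) <= z1 -> z1 < z2 ->
     Fhat n j (Qof n beta) z2 + eta * Rpower z2 (INR n / 2)
       < Fhat n j (Qof n beta) z1 + eta * Rpower z1 (INR n / 2)) /\
  (forall z1 z2 : R, 0 < z1 -> powR0 eta (2 / INR n) <= z1 -> z1 < z2 ->
     Ghat n j (Qof n beta) z1 - eta * Rpower z1 (INR n / 2)
       < Ghat n j (Qof n beta) z2 - eta * Rpower z2 (INR n / 2)).
Proof.
  intros Hn Hj Hb HQ He.
  set (Q := Qof n beta) in *.
  assert (HJ : 1 <= INR j) by (apply (le_INR 1); lia).
  assert (Hn0 : 0 < INR n) by (apply lt_0_INR; lia).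
  split; intros z1 z2 Hz1 Hez Hz12.
  - destruct (pow_part n z1 Hn Hz1) as [E1 P1].
    destruct (pow_part n z2 Hn ltac:(lra)) as [E2 P2].
    assert (Hle := eta_le n eta z1 Hn He Hz1 Hez).
    set (p1 := Rpower z1 (INR n / 2)) in *. set (p2 := Rpower z2 (INR n / 2)) in *.
    assert (Hp12 : p1 < p2) by (apply Rlt_Rpower_l; [lra | lra]).
    assert (HEta := eta_part j eta p1 p2 Hj He Hle P1 Hp12).
    unfold Fhat, Ffun, t0, yof. rewrite !Ropp_involutive. rewrite E1, E2.
    set (s1 := INR j * p1 ^ 2). set (s2 := INR j * p2 ^ 2).
    assert (Hs1 : 0 < s1) by (unfold s1; apply Rmult_lt_0_compat; [lra | apply pow_lt; lra]).
    assert (Hs12 : s1 < s2).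
    { unfold s1, s2. apply Rmult_lt_compat_l; [lra|]. simpl. nra. }
    set (T1 := (-1 + sqrt (1 + 4 * Q / s1)) / 2).
    set (T2 := (-1 + sqrt (1 + 4 * Q / s2)) / 2).
    assert (HT2 : 0 < T2).
    { unfold T2. assert (0 < 4 * Q / s2) by (apply Rdiv_lt_0_compat; lra).
      assert (sqrt 1 < sqrt (1 + 4 * Q / s2)) by (apply sqrt_lt_1; lra). rewrite sqrt_1 in *. lra. }
    assert (HM := F_max s1 Q T2 Hs1 ltac:(lra) HT2). simpl in HM. fold T1 in HM.
    assert (s2 - s1 = INR j * (p2^2 - p1^2)) by (unfold s1, s2; ring).
    assert (0 < (s2 - s1) * T2) by (apply Rmult_lt_0_compat; lra).
    nra.
  - destruct (pow_part n z1 Hn Hz1) as [E1 P1].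
    destruct (pow_part n z2 Hn ltac:(lra)) as [E2 P2].
    assert (Hle := eta_le n eta z1 Hn He Hz1 Hez).
    set (p1 := Rpower z1 (INR n / 2)) in *. set (p2 := Rpower z2 (INR n / 2)) in *.
    assert (Hp12 : p1 < p2) by (apply Rlt_Rpower_l; [lra | lra]).
    assert (HEta := eta_part j eta p1 p2 Hj He Hle P1 Hp12).
    unfold Ghat, Gfun, u0, yof. rewrite !Ropp_involutive. rewrite E1, E2.
    set (s1 := INR j * p1 ^ 2). set (s2 := INR j * p2 ^ 2).
    assert (Hs1 : 0 < s1) by (unfold s1; apply Rmult_lt_0_compat; [lra | apply pow_lt; lra]).
    assert (Hs12 : s1 < s2).
    { unfold s1, s2. apply Rmult_lt_compat_l; [lra|]. simpl. nra. }
    set (c := 2 * Q + gamma_n n).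
    assert (Hg : 0 < gamma_n n).
    { unfold gamma_n. assert (0 < 1 / INR n) by (apply Rdiv_lt_0_compat; lra). lra. }
    assert (Hc : 0 < c) by (unfold c; lra).
    replace (4 * Q + 2 * gamma_n n) with (2 * c) by (unfold c; ring).
    assert (Gen : forall s, 0 < s ->
      let r := sqrt s in let u := r / 2 * (1 + sqrt (1 + 2 * c / s)) in
      0 < u /\ r < u /\ u * (u - r) * 2 = c /\ r * r = s).
    { intros s Hs r u.
      set (W := sqrt (1 + 2 * c / s)) in *.
      assert (Hq : 0 < 2 * c / s) by (apply Rdiv_lt_0_compat; lra).
      assert (HW2 : W * W = 1 + 2 * c / s) by (unfold W; apply sqrt_sqrt; lra).
      assert (HW1 : sqrt 1 < W) by (unfold W; apply sqrt_lt_1; lra). rewrite sqrt_1 in HW1.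
      assert (Hr : 0 < r) by (unfold r; apply sqrt_lt_R0; lra).
      assert (Hrr : r * r = s) by (unfold r; apply sqrt_sqrt; lra).
      split; [unfold u; nra|]. split; [unfold u; nra|]. split; [|exact Hrr].
      unfold u. replace (r / 2 * (1 + W) * (r / 2 * (1 + W) - r) * 2) with (r * r * (W * W - 1) / 2) by field.
      rewrite HW2, Hrr. field; repeat split; lra. }
    destruct (Gen s1 Hs1) as [U1 [R1 [C1 RR1]]].
    destruct (Gen s2 ltac:(lra)) as [U2 [R2 [C2 RR2]]].
    set (r1 := sqrt s1) in *. set (r2 := sqrt s2) in *.
    set (u1 := r1 / 2 * (1 + sqrt (1 + 2 * c / s1))) in *.
    set (u2 := r2 / 2 * (1 + sqrt (1 + 2 * c / s2))) in *.
    assert (Hr12 : r1 < r2) by (apply sqrt_lt_1; lra).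
    assert (Hr1 : 0 <= r1) by apply sqrt_pos.
    assert (HM := G_max r2 c (u1 + (r2 - r1)) u2 ltac:(lra) Hc ltac:(lra) U2 C2).
    assert (Hln : ln u1 < ln (u1 + (r2 - r1))) by (apply ln_increasing; lra).
    assert (c * ln u1 < c * ln (u1 + (r2 - r1))) by (apply Rmult_lt_compat_l; lra).
    replace ((u1 + (r2 - r1) - r2)) with (u1 - r1) in HM by ring.
    assert (s2 - s1 = INR j * (p2^2 - p1^2)) by (unfold s1, s2; ring).
    nra.
Qed.
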